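(* Let $Y$, $Z$ be bigraphs and $f,g: Y\to Z$ bigraph homomorphisms which are $\times$-homotopic. Then for every bigraph $X$ the induced order-preserving maps $f_*, g_*: \mathrm{Hom}_{/K_2}(X,Y)\to \mathrm{Hom}_{/K_2}(X,Z)$, given by $(f_*\eta)(v)=f(\eta(v))$, are homotopic (as maps of geometric realizations).
   Context: A graph is a set $V$ with a symmetric relation $E\subset V\times V$ (loops allowed); $K_2$ has vertices $0,1$ and edges $(0,1),(1,0)$. A bigraph is a graph $X$ with a graph homomorphism $\varepsilon_X: X\to K_2$; $V_i(X)=\varepsilon_X^{-1}(i)$; bigraph homomorphisms are graph homomorphisms commuting with colorings. A multi-homomorphism $\eta$ from $X$ to $Y$ assigns to each $v\in V(X)$ a finite nonempty subset $\eta(v)\subset V(Y)$ such that $(v,w)\in E(X)$ implies $\eta(v)\times\eta(w)\subset E(Y)$; it is 2-colored if $\eta(v)\subset V_i(Y)$ for $v\in V_i(X)$. $\mathrm{Hom}_{/K_2}(X,Y)$ is the poset of 2-colored multi-homomorphisms ordered by $\eta\le\eta'$ iff $\eta(v)\subset\eta'(v)$ for all $v$; a bigraph homomorphism is identified with the multi-homomorphism $v\mapsto\{f(v)\}$. Bigraph homomorphisms $f,g:Y\to Z$ are $\times$-homotopic if they lie in the same connected component of $\mathrm{Hom}_{/K_2}(Y,Z)$. Posets are regarded as spaces via geometric realizations of order complexes. *)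

(* Defs.v *)
From HB Require Import structures.
From mathcomp Require Import all_boot all_order all_algebra.
From mathcomp Require Import all_classical all_reals topology.
From mathcomp Require Import Rstruct Rstruct_topology.
Set Implicit Arguments. Unset Strict Implicit. Unset Printing Implicit Defensive.
Import Order.TTheory GRing.Theory Num.Theory.
Local Open Scope classical_set_scope.
Local Open Scope ring_scope.

Notation R := Rdefinitions.R.

(* A graph is a type with a symmetric relation (loops allowed); a bigraph has a
   graph homomorphism to K_2, i.e. a colouring eps : V -> bool (0 = false,
   1 = true) with adjacent vertices receiving different colours. *)
Record bigraph := Bigraph {
  bV : Type;
  bE : bV -> bV -> Prop;
  bE_sym : forall v w, bE v w -> bE w v;
  beps : bV -> bool;
  beps_hom : forall v w, bE v w -> beps v <> beps w }.

Definition bihom (Y Z : bigraph) (f : bV Y -> bV Z) : Prop :=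
  (forall v w, bE v w -> bE (f v) (f w)) /\ (forall v, beps (f v) = beps v).

Definition multihom2 (X Y : bigraph) (eta : bV X -> set (bV Y)) : Prop :=
  [/\ (forall v, finite_set (eta v) /\ eta v !=set0),
      (forall v w, bE v w -> forall a b, eta v a -> eta w b -> bE a b) &
      (forall v a, eta v a -> beps a = beps v)].

(* ambient type of multi-homomorphism candidates (with a classical choice
   structure, needed for finite sums over it) *)
Definition mhT (X Y : bigraph) := bV X -> set (bV Y).

(* The poset Hom_{/K2}(X,Y): carrier [multihom2 X Y] inside the type
   bV X -> set (bV Y), ordered by pointwise inclusion. *)
Definition homle (X Y : bigraph) (eta eta' : bV X -> set (bV Y)) : Prop :=
  forall v, eta v `<=` eta' v.

Definition mh_of (X Y : bigraph) (f : bV X -> bV Y) : bV X -> set (bV Y) :=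
  fun v => [set f v].

Definition fstar (X Y Z : bigraph) (f : bV Y -> bV Z)
  (eta : mhT X Y) : mhT X Z := fun v => f @` eta v.

(* A poset is given by an ambient type T, its carrier A : set T and its order
   le.  A point of the realization of the order complex is a finitely
   supported function t : T -> R, nonnegative, with total mass 1, whose support
   is a chain of A. *)
Definition supp (T : Type) (t : T -> R) : set T := [set x | t x != 0].

Definition geom_pt (T : choiceType) (A : set T) (le : T -> T -> Prop) (t : T -> R)
  : Prop :=
  [/\ finite_set (supp t), supp t `<=` A, (forall x, 0 <= t x),
      \sum_(x \in supp t) t x = 1 &
      (forall x y, supp t x -> supp t y -> le x y \/ le y x)].

Definition realization (T : choiceType) (A : set T) (le : T -> T -> Prop) :=
  {t : T -> R | geom_pt A le t}.


(* The weak (CW) topology: U is open iff its trace on every finite subcomplex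
   (points supported in a finite set S) is open for the Euclidean topology. *)
Definition weak_open (T : choiceType) (A : set T) (le : T -> T -> Prop)
  (U : set (realization A le)) : Prop :=
  forall (S : set T), finite_set S -> forall p, U p -> supp (sval p) `<=` S ->
  exists2 e : R, 0 < e & forall q, supp (sval q) `<=` S ->
    (forall x, `|sval q x - sval p x| < e) -> U q.

Section WeakTop.
Variables (T : choiceType) (A : set T) (le : T -> T -> Prop).

HB.instance Definition _ := gen_eqMixin (realization A le).
HB.instance Definition _ := gen_choiceMixin (realization A le).

Let weak_openT : weak_open [set: realization A le].
Proof. by move=> S _ p _ _; exists 1. Qed.

Let weak_openI : setI_closed (@weak_open T A le).
Proof.
move=> U V oU oV S fS p [Up Vp] sp.
have [e1 e1gt0 H1] := oU S fS p Up sp.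
have [e2 e2gt0 H2] := oV S fS p Vp sp.
exists (Num.min e1 e2); first by rewrite lt_min e1gt0 e2gt0.
move=> q sq hq; split.
  by apply: H1 => // x; apply: (lt_le_trans (hq x)); rewrite ge_min lexx.
by apply: H2 => // x; apply: (lt_le_trans (hq x)); rewrite ge_min lexx orbT.
Qed.

Let weak_open_bigU (I : Type) (f : I -> set (realization A le)) :
  (forall i, weak_open (f i)) -> weak_open (\bigcup_i f i).
Proof.
move=> hf S fS p [i _ fip] sp.
have [e egt0 H] := hf i S fS p fip sp.
by exists e => // q sq hq; exists i => //; apply: H.
Qed.

HB.instance Definition _ := isOpenTopological.Build (realization A le)
  weak_openT weak_openI weak_open_bigU.
End WeakTop.

Definition vertex (T : Type) (x : T) : T -> R :=
  fun y => if `[< y = x >] then 1 else 0.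

(* realization of an order-preserving map phi : affine extension *)
Definition push (T T' : choiceType) (phi : T -> T') (t : T -> R) : T' -> R :=
  fun y => \sum_(x \in [set x | supp t x /\ phi x = y]) t x.

Definition HomK2 (X Y : bigraph) : topologicalType :=
  @realization (mhT X Y) (@multihom2 X Y) (@homle X Y).

(* f and g are x-homotopic: same connected component of |Hom_{/K2}(Y,Z)| *)
Definition xhomotopic (Y Z : bigraph) (f g : bV Y -> bV Z) : Prop :=
  exists (p q : HomK2 Y Z),
    sval p = vertex (mh_of f : mhT Y Z) /\ sval q = vertex (mh_of g : mhT Y Z) /\
    connected_component setT p q.

(* Main.v *)
Require Import Defs.
From HB Require Import structures.
From mathcomp Require Import all_boot all_order all_algebra.
From mathcomp Require Import all_classical all_reals topology.
From mathcomp Require Import Rstruct Rstruct_topology.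
From mathcomp Require Import lra ring.
From mathcomp Require Import finmap.
From mathcomp Require Import num_normedtype pseudometric_normed_Zmodule normed_module.
Set Implicit Arguments. Unset Strict Implicit. Unset Printing Implicit Defensive.
Import Order.TTheory GRing.Theory Num.Theory.
Local Open Scope classical_set_scope.
Local Open Scope ring_scope.

Section Sums.
Variable T : choiceType.
Implicit Types (D : set T) (f : T -> R) (X : {fset T}).

Lemma fsumE D f X : (forall i, D i -> f i != 0 -> i \in X) ->
  \sum_(i \in D) f i = \sum_(i <- X) (if i \in D then f i else 0).
Proof.
move=> H; rewrite fsbig_mkcond (fsbigTE X) //.
move=> i iX; rewrite /patch; case: ifP => // /set_mem Di.
by apply/eqP; apply: contraNT iX => /(H _ Di).
Qed.

Lemma sum_indep (G : T -> R) (X Y : {fset T}) : (forall i, G i != 0 -> i \in X) ->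
  (forall i, G i != 0 -> i \in Y) ->
  \sum_(i <- X) G i = \sum_(i <- Y) G i.
Proof.
move=> HX HY.
have HX' : forall i, i \notin X -> G i = 0.
  by move=> i iX; apply/eqP; apply: contraNT iX => /HX.
have HY' : forall i, i \notin Y -> G i = 0.
  by move=> i iY; apply/eqP; apply: contraNT iY => /HY.
by rewrite -(fsbigTE X G HX') (fsbigTE Y G HY').
Qed.

Lemma sum_const_seq (r : seq T) (c : R) : \sum_(i <- r) c = c *+ size r.
Proof. by elim: r => [|a r IH]; rewrite ?big_nil ?big_cons ?IH ?mulrS. Qed.

Lemma sum_neq0 (r : seq T) (G : T -> R) : \sum_(i <- r) G i != 0 ->
  exists2 i, i \in r & G i != 0.
Proof.
move=> H; apply: contrapT => Hn; move/eqP: H; apply.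
apply: big1_seq => i /andP[_ ir]; apply/eqP; apply: contraT => Gi.
by exfalso; apply: Hn; exists i.
Qed.

Lemma sum_pred1 (T' : eqType) (Z : seq T') (z0 : T') (c : R) : z0 \in Z -> uniq Z ->
  \sum_(z <- Z) (if z0 == z then c else 0) = c.
Proof.
move=> zZ uZ; rewrite (bigD1_seq z0) //= eqxx big1 ?addr0 // => z.
by rewrite eq_sym => /negbTE ->.
Qed.
End Sums.

Section Generic.
Variables (T T' : choiceType) (A : set T) (le : T -> T -> Prop)
  (A' : set T') (le' : T' -> T' -> Prop).
Hypothesis le_anti : forall x y, A x -> A y -> le x y -> le y x -> x = y.
Hypothesis le_tr : forall x y z, A x -> A y -> A z -> le x y -> le y z -> le x z.
Hypothesis le'_tr : forall x y z, A' x -> A' y -> A' z -> le' x y -> le' y z -> le' x z.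
Variables (phi psi : T -> T').
Hypothesis phiA : forall x, A x -> A' (phi x).
Hypothesis psiA : forall x, A x -> A' (psi x).
Hypothesis phi_mono : forall x y, A x -> A y -> le x y -> le' (phi x) (phi y).
Hypothesis psi_mono : forall x y, A x -> A y -> le x y -> le' (psi x) (psi y).
Hypothesis phi_psi : forall x, A x -> le' (phi x) (psi x).

Definition clamp (s : R) : R := Num.min 1 (Num.max 0 s).
Definition Lsum (t : T -> R) (x : T) : R :=
  \sum_(y \in supp t) (if `[< le y x /\ y <> x >] then t y else 0).
Definition lo t s x := Num.max 0 (Num.min (t x) (1 - clamp s - Lsum t x)).
Definition hi t s x := t x - lo t s x.
Definition Hf t s : T' -> R := fun z => push phi (lo t s) z + push psi (hi t s) z.

Lemma clamp_cases s : (clamp s = 0 /\ s <= 0) \/ (clamp s = s /\ 0 <= s /\ s <= 1)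
  \/ (clamp s = 1 /\ 1 <= s).
Proof.
rewrite /clamp; case: (leP 0 s) => h1; [case: (leP 1 s) => h3 | case: (leP 1 0) => h3];
 try lra.
Qed.

Lemma clamp01 s : 0 <= clamp s <= 1.
Proof. by case: (clamp_cases s) => [[-> _]|[[-> [h1 h2]]|[-> _]]]; apply/andP; split; lra. Qed.

Lemma clamp_lip s s' : `|clamp s - clamp s'| <= `|s - s'|.
Proof.
have := ler_norm (s - s'); have := ler_norm (s' - s); rewrite distrC.
rewrite ler_norml => a b.
by case: (clamp_cases s) => [[-> ?]|[[-> [? ?]]|[-> ?]]];
  case: (clamp_cases s') => [[-> ?]|[[-> [? ?]]|[-> ?]]]; apply/andP; split; lra.
Qed.

Lemma Lsum_X t x (X : {fset T}) : (forall y, t y != 0 -> y \in X) ->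
  Lsum t x = \sum_(y <- X) (if `[< le y x /\ y <> x >] then t y else 0).
Proof.
move=> HX; rewrite /Lsum (fsumE (X:=X)); last by move=> i ti _; apply: HX.
apply: eq_bigr => y _; case: ifPn => // /negP ys.
case: ifP => // _; apply/esym/eqP; apply: contraT => ty; exfalso; apply: ys.
by apply: mem_set.
Qed.

Lemma push_X (f : T -> T') u z (X : {fset T}) : (forall y, u y != 0 -> y \in X) ->
  push f u z = \sum_(x <- X) (if f x == z then u x else 0).
Proof.
move=> HX; rewrite /push (fsumE (X:=X)); last by move=> i [ui _] _; apply: HX.
apply: eq_bigr => y _; case: ifPn => [/set_mem [uy ->]|/negP ys]; first by rewrite eqxx.
case: eqP => // fy; apply/esym/eqP; apply: contraT => uy; exfalso; apply: ys.
by apply: mem_set.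
Qed.
Lemma mm_cases (a b : R) : (Num.max 0 (Num.min a b) = 0 /\ (a <= 0 \/ b <= 0)) \/
  (Num.max 0 (Num.min a b) = a /\ 0 <= a /\ a <= b) \/
  (Num.max 0 (Num.min a b) = b /\ 0 <= b /\ b <= a).
Proof.
case: (leP a b) => h1; [case: (leP 0 a) => h2 | case: (leP 0 b) => h2]; lra.
Qed.

Lemma lo_cases t s x : (lo t s x = 0 /\ (t x <= 0 \/ 1 - clamp s - Lsum t x <= 0)) \/
  (lo t s x = t x /\ 0 <= t x /\ t x <= 1 - clamp s - Lsum t x) \/
  (lo t s x = 1 - clamp s - Lsum t x /\ 0 <= 1 - clamp s - Lsum t x /\
      1 - clamp s - Lsum t x <= t x).
Proof. exact: mm_cases. Qed.

Lemma lo_ge0 t s x : 0 <= lo t s x.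
Proof. by case: (lo_cases t s x); lra. Qed.

Lemma lo_le t s x : 0 <= t x -> lo t s x <= t x.
Proof. by case: (lo_cases t s x); lra. Qed.

Lemma hi_ge0 t s x : 0 <= t x -> 0 <= hi t s x.
Proof. by rewrite /hi; case: (lo_cases t s x); lra. Qed.

Lemma lo_nz t s x : lo t s x != 0 -> t x != 0.
Proof.
apply: contraNN => /eqP tx; apply/eqP; move: (lo_cases t s x); rewrite tx; lra.
Qed.

Lemma hi_nz t s x : hi t s x != 0 -> t x != 0.
Proof.
apply: contraNN => /eqP tx; apply/eqP; rewrite /hi; move: (lo_cases t s x); rewrite tx; lra.
Qed.

Lemma lo_pos t s x : lo t s x != 0 -> Lsum t x < 1 - clamp s.
Proof.
move=> /eqP h; move: (lo_cases t s x); lra.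
Qed.

Lemma hi_pos t s x : 0 <= t x -> hi t s x != 0 -> 1 - clamp s < Lsum t x + t x.
Proof.
move=> t0 /eqP h; move: h (lo_cases t s x); rewrite /hi; lra.
Qed.

Lemma suppX (t : T -> R) (fin : finite_set (supp t)) :
  forall y, t y != 0 -> y \in fset_set (supp t).
Proof. by move=> w tw; rewrite in_fset_set //; apply: mem_set. Qed.

Lemma Lsum_step t x y : geom_pt A le t -> supp t x -> supp t y -> le x y -> x <> y ->
  Lsum t x + t x <= Lsum t y.
Proof.
case=> fin sA nn _ _ sx sy lxy nxy.
have HX := suppX fin.
rewrite (Lsum_X x HX) (Lsum_X y HX).
have -> : t x = \sum_(w <- fset_set (supp t)) (if x == w then t x else 0).
  by rewrite sum_pred1 // ?fset_uniq // HX.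
rewrite -big_split /=; apply: ler_sum => w _.
have tw := nn w.
case: (asboolP (le w x /\ w <> x)) => c1; case: (asboolP (le w y /\ w <> y)) => c2;
  case: (eqVneq x w) => c3; rewrite ?addr0 ?add0r //; try lra.
- by case: c1 => _; rewrite c3.
- by case: c1 => _; rewrite c3.
- have [tw0|twn] := eqVneq (t w) 0; first by rewrite tw0.
  exfalso; apply: c2; case: c1 => lwx nwx; split.
    by apply: (le_tr (sA _ twn) (sA _ sx) (sA _ sy)).
  by move=> wy; rewrite wy in lwx; apply: nxy; apply: le_anti => //; apply: sA.
- by rewrite c3.
- by exfalso; apply: c2; rewrite -c3.
Qed.

Lemma Hf_supp t s z : finite_set (supp t) -> Hf t s z != 0 ->
  (exists2 x, lo t s x != 0 & phi x = z) \/ (exists2 x, hi t s x != 0 & psi x = z).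
Proof.
move=> fin; have HX := suppX fin.
have HXl : forall y, lo t s y != 0 -> y \in fset_set (supp t).
  by move=> y /lo_nz /HX.
have HXh : forall y, hi t s y != 0 -> y \in fset_set (supp t).
  by move=> y /hi_nz /HX.
rewrite /Hf (push_X _ _ HXl) (push_X _ _ HXh).
have [h1|h1] := eqVneq (\sum_(x <- fset_set (supp t)) (if phi x == z then lo t s x else 0)) 0.
  rewrite h1 add0r => /sum_neq0 [x _]; case: (psi x =P z) => [px|_]; rewrite ?eqxx //= => hx; right; by exists x.
move: h1 => /sum_neq0 [x _]; case: (phi x =P z) => [px|_]; rewrite ?eqxx //= => hx _; left; by exists x.
Qed.

Lemma lohi_le t s x y : geom_pt A le t -> lo t s x != 0 -> hi t s y != 0 ->
  le' (phi x) (psi y).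
Proof.
move=> gp; have gp' := gp; case: gp' => fin sA nn _ ch lx hy.
have sx : supp t x := lo_nz lx; have sy : supp t y := hi_nz hy.
case: (ch x y sx sy) => [lxy|lyx].
  apply: (le'_tr (phiA (sA _ sx)) (phiA (sA _ sy)) (psiA (sA _ sy))).
    exact: phi_mono (sA _ sx) (sA _ sy) lxy.
  exact: phi_psi (sA _ sy).
case: (eqVneq y x) => [->|nyx]; first exact: phi_psi (sA _ sx).
have := Lsum_step gp sy sx lyx (elimN eqP nyx).
have := lo_pos lx; have := hi_pos (nn y) hy; lra.
Qed.

Lemma sum_geom t : geom_pt A le t ->
  \sum_(x <- fset_set (supp t)) t x = 1.
Proof.
case=> fin _ _ s1 _; rewrite -s1 (fsumE (X := fset_set (supp t))); last first.
  by move=> i _; apply: suppX.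
apply: eq_bigr => x _; case: ifPn => // /negP nx; apply/eqP; apply: contraT => tx.
by exfalso; apply: nx; apply: mem_set.
Qed.

Lemma Hgeom t s : geom_pt A le t -> geom_pt A' le' (Hf t s).
Proof.
move=> gp; have gp' := gp; case: gp' => fin sA nn s1 ch.
pose S' := [set phi x | x in supp t] `|` [set psi x | x in supp t].
have sub : supp (Hf t s) `<=` S'.
  move=> z /(Hf_supp fin) [[x lx <-]|[x hx <-]]; [left|right]; exists x => //.
    exact: lo_nz lx.
  exact: hi_nz hx.
have finS' : finite_set S' by rewrite finite_setU; split; apply: finite_image.
have HX := suppX fin.
have HXl : forall y, lo t s y != 0 -> y \in fset_set (supp t).
  by move=> y /lo_nz /HX.
have HXh : forall y, hi t s y != 0 -> y \in fset_set (supp t).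
  by move=> y /hi_nz /HX.
split.
- exact: sub_finite_set sub finS'.
- move=> z /sub [[x sx <-]|[x sx <-]]; [apply: phiA | apply: psiA]; exact: sA.
- move=> z; rewrite /Hf; apply: addr_ge0; apply: fsumr_ge0 => x _;
    [exact: lo_ge0 | exact: hi_ge0].
- rewrite (fsumE (X := fset_set S')); last first.
    by move=> z /sub zS _; rewrite in_fset_set //; apply: mem_set.
  rewrite (eq_bigr (fun z => Hf t s z)); last first.
    move=> z _; case: ifPn => // /negP nz; apply/esym/eqP; apply: contraT => hz.
    by exfalso; apply nz; apply: mem_set.
  under eq_bigr => z _ do rewrite /Hf (push_X _ _ HXl) (push_X _ _ HXh).
  rewrite big_split /= exchange_big /= [X in _ + X]exchange_big /=.
  rewrite (eq_big_seq (fun x => lo t s x)); last first.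
    move=> x; rewrite in_fset_set // => /set_mem xs; rewrite sum_pred1 //.
    by rewrite in_fset_set //; apply: mem_set; left; exists x.
  rewrite [X in _ + X](eq_big_seq (fun x => hi t s x)); last first.
    move=> x; rewrite in_fset_set // => /set_mem xs; rewrite sum_pred1 //.
    by rewrite in_fset_set //; apply: mem_set; right; exists x.
  rewrite -big_split /= -(sum_geom gp); apply: eq_bigr => x _; by rewrite /hi addrC subrK.
- move=> z1 z2 /(Hf_supp fin) h1 /(Hf_supp fin) h2.
  case: h1 => [[x1 l1 <-]|[x1 l1 <-]]; case: h2 => [[x2 l2 <-]|[x2 l2 <-]].
  + have sx1 : supp t x1 := lo_nz l1; have sx2 : supp t x2 := lo_nz l2.
    by case: (ch x1 x2 sx1 sx2) => h; [left|right]; apply: phi_mono => //; apply: sA.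
  + by left; exact: lohi_le gp l1 l2.
  + by right; exact: lohi_le gp l2 l1.
  + have sx1 : supp t x1 := hi_nz l1; have sx2 : supp t x2 := hi_nz l2.
    by case: (ch x1 x2 sx1 sx2) => h; [left|right]; apply: psi_mono => //; apply: sA.
Qed.

Lemma mm_lip (a b a' b' : R) :
  `|Num.max 0 (Num.min a b) - Num.max 0 (Num.min a' b')| <= `|a - a'| + `|b - b'|.
Proof.
have := ler_norm (a - a'); have := ler_norm (a' - a); rewrite (distrC a' a).
have := ler_norm (b - b'); have := ler_norm (b' - b); rewrite (distrC b' b).
rewrite ler_norml => *; apply/andP.
by case: (mm_cases a b) => [[-> ?]|[[-> [? ?]]|[-> [? ?]]]];
  case: (mm_cases a' b') => [[-> ?]|[[-> [? ?]]|[-> [? ?]]]]; split; lra.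
Qed.

Lemma push_lip (f : T -> T') (X : {fset T}) u u' z B :
  (forall y, u y != 0 -> y \in X) -> (forall y, u' y != 0 -> y \in X) ->
  0 <= B -> (forall x, `|u x - u' x| <= B) ->
  `|push f u z - push f u' z| <= (size X)%:R * B.
Proof.
move=> HX HX' B0 H; rewrite (push_X _ _ HX) (push_X _ _ HX') -sumrB.
apply: le_trans (ler_norm_sum _ _ _) _; rewrite mulr_natl -sum_const_seq.
by apply: ler_sum => x _; case: ifP => _; rewrite ?subrr ?normr0.
Qed.

Lemma Hf_lip (X : {fset T}) t t' s s' d :
  (forall y, t y != 0 -> y \in X) -> (forall y, t' y != 0 -> y \in X) ->
  0 <= d -> (forall x, `|t x - t' x| <= d) ->
  forall z, `|Hf t s z - Hf t' s' z| <= 4 * ((size X)%:R + 1) ^+ 2 * (d + `|s - s'|).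
Proof.
move=> HX HX' d0 H z.
set N := (size X)%:R.
have N0 : 0 <= N by rewrite /N ler0n.
have LB : forall x, `|Lsum t x - Lsum t' x| <= N * d.
  move=> x; rewrite (Lsum_X x HX) (Lsum_X x HX') -sumrB.
  apply: le_trans (ler_norm_sum _ _ _) _; rewrite mulr_natl -sum_const_seq.
  by apply: ler_sum => y _; case: ifP => _; rewrite ?subrr ?normr0.
have loB : forall x, `|lo t s x - lo t' s' x| <= d + `|s - s'| + N * d.
  move=> x; apply: le_trans (mm_lip _ _ _ _) _.
  have := H x; have := LB x; have := clamp_lip s s'.
  set u := Lsum t x - Lsum t' x; set v := clamp s - clamp s'.
  have -> : 1 - clamp s - Lsum t x - (1 - clamp s' - Lsum t' x) = - (v + u).
    by rewrite /u /v; ring.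
  rewrite normrN; have := ler_normD v u; lra.
have hiB : forall x, `|hi t s x - hi t' s' x| <= d + (d + `|s - s'| + N * d).
  move=> x; rewrite /hi.
  have -> : t x - lo t s x - (t' x - lo t' s' x) = (t x - t' x) - (lo t s x - lo t' s' x).
    by ring.
  apply: le_trans (ler_normB _ _) _; apply: lerD; [exact: H | exact: loB].
have HXl : forall y, lo t s y != 0 -> y \in X by move=> y /lo_nz /HX.
have HXl' : forall y, lo t' s' y != 0 -> y \in X by move=> y /lo_nz /HX'.
have HXh : forall y, hi t s y != 0 -> y \in X by move=> y /hi_nz /HX.
have HXh' : forall y, hi t' s' y != 0 -> y \in X by move=> y /hi_nz /HX'.
have e0 := normr_ge0 (s - s').
have P1 := push_lip phi z HXl HXl' _ loB.
have P2 := push_lip psi z HXh HXh' _ hiB.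
rewrite /Hf.
have -> : push phi (lo t s) z + push psi (hi t s) z -
  (push phi (lo t' s') z + push psi (hi t' s') z) =
  (push phi (lo t s) z - push phi (lo t' s') z) +
  (push psi (hi t s) z - push psi (hi t' s') z) by ring.
apply: le_trans (ler_normD _ _) _.
have B1 : 0 <= d + `|s - s'| + N * d by apply: addr_ge0; [lra| exact: mulr_ge0].
have := P1 B1; have := P2 (addr_ge0 d0 B1); rewrite /N; set M := (size X)%:R.
move=> h1 h2; rewrite /N in N0; nra.
Qed.

Definition HR (ps : realization A le * R) : realization A' le' :=
  exist _ (Hf (sval ps.1) ps.2) (Hgeom ps.2 (proj2_sig ps.1)).

Lemma Hf_suppS (S : set T) t s : geom_pt A le t -> supp t `<=` S ->
  supp (Hf t s) `<=` [set phi x | x in S] `|` [set psi x | x in S].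
Proof.
case=> fin _ _ _ _ sS z /(Hf_supp fin) [[x lx <-]|[x hx <-]]; [left|right]; exists x => //.
  exact/sS/(lo_nz lx).
exact/sS/(hi_nz hx).
Qed.

Lemma suppS_X (S : set T) (finS : finite_set S) (t : T -> R) : supp t `<=` S ->
  forall y, t y != 0 -> y \in fset_set S.
Proof. by move=> sS y ty; rewrite in_fset_set //; apply: mem_set; apply: sS. Qed.

Lemma lip_aux (M e d a : R) : 0 < M -> 0 < e -> 0 <= d -> d <= e / (2 * M) -> 0 <= a ->
  a < e / (2 * M) -> M * (d + a) < e.
Proof.
move=> M0 e0 d0 hd a0 ha; have : M * (e / (2 * M)) = e / 2.
  by field; apply/eqP; lra.
set k := e / (2 * M) in hd ha * => hk.
have h1 : M * d <= M * k by rewrite ler_pM2l.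
have h2 : M * a < M * k by rewrite ltr_pM2l.
lra.
Qed.

Lemma lip_aux2 (M e a : R) : 0 < M -> 0 < e -> 0 <= a ->
  a <= e / (2 * M) -> M * (0 + a) < e.
Proof.
move=> M0 e0 a0 ha; have : M * (e / (2 * M)) = e / 2.
  by field; apply/eqP; lra.
set k := e / (2 * M) in ha * => hk.
have h1 : M * a <= M * k by rewrite ler_pM2l.
lra.
Qed.

Lemma nbhsR (s e : R) : 0 < e -> nbhs s [set s' | `|s' - s| < e].
Proof.
move=> e0; apply/nbhs_ballP; exists e => // y /=; by rewrite /ball /= distrC.
Qed.

Lemma HR_cont : continuous HR.
Proof.
apply/continuousP => U oU; rewrite openE => -[p s] /= Ups.
have gp := proj2_sig p; have gp' := gp; case: gp' => fin0 _ _ _ _.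
pose S0' := [set phi x | x in supp (sval p)] `|` [set psi x | x in supp (sval p)].
have finS0' : finite_set S0' by rewrite finite_setU; split; apply: finite_image.
have [e0 e0p He0] := oU S0' finS0' (HR (p, s)) Ups (@Hf_suppS (supp (sval p)) (sval p) s gp (@subset_refl _ _)).
pose M0 : R := 4 * ((size (fset_set (supp (sval p))))%:R + 1) ^+ 2.
have M0p : 0 < M0 by rewrite /M0; apply: mulr_gt0 => //; apply: exprn_gt0; 
  apply: ltr_pwDr => //; rewrite ler0n.
pose d0 := e0 / (2 * M0).
have d0p : 0 < d0 by rewrite /d0; apply: divr_gt0 => //; apply: mulr_gt0.
have Jp : forall s', `|s' - s| <= d0 -> U (HR (p, s')).
  move=> s' hs; apply: He0; first exact: (@Hf_suppS (supp (sval p)) (sval p) s' gp (@subset_refl _ _)).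
  move=> z /=; apply: le_lt_trans.
    apply: (@Hf_lip (fset_set (supp (sval p))) (sval p) (sval p) s' s 0).
    - exact: suppX.
    - exact: suppX.
    - by [].
    - by move=> x; rewrite subrr normr0.
  exact: lip_aux2.
pose J := `[s - d0, s + d0]%classic.
have Jn : forall s', J s' -> `|s' - s| <= d0.
  move=> s'; rewrite /J /= in_itv /= => /andP[h1 h2].
  by rewrite ler_norml; apply/andP; split; lra.
pose V := [set q | forall s', J s' -> U (HR (q, s'))].
have Vp : V p by move=> s' /Jn; exact: Jp.
have oV : open V.
  have : weak_open V; last by [].
  move=> S finS q Vq sqS.
  have gq := proj2_sig q.
  pose M : R := 4 * ((size (fset_set S))%:R + 1) ^+ 2.
  have Mp : 0 < M by rewrite /M; apply: mulr_gt0 => //; apply: exprn_gt0;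
    apply: ltr_pwDr => //; rewrite ler0n.
  pose S' := [set phi x | x in S] `|` [set psi x | x in S].
  have finS' : finite_set S' by rewrite finite_setU; split; apply: finite_image.
  pose F := filter_from [set e : R | 0 < e] (fun e => [set q' : realization A le |
     supp (sval q') `<=` S /\ forall x, `|sval q' x - sval q x| < e]).
  have FF : Filter F.
    apply: filter_from_filter; first by exists 1; rewrite /= ltr01.
    move=> e1 e2 h1 h2; exists (Num.min e1 e2); first by rewrite /= lt_min h1 h2.
    move=> q' [sq' hq']; split; split => // x; apply: (lt_le_trans (hq' x));
      by rewrite ge_min lexx ?orbT ?orTb.
  have cJ : compact J by apply: segment_compact.
  have := (proj1 (compact_near_coveringP J) cJ) (realization A le) F
     (fun q' x => U (HR (q', x))) FF.
  case.
    move=> x Jx.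
    have Ux := Vq x Jx.
    have [e1 e1p He1] := oU S' finS' (HR (q, x)) Ux (@Hf_suppS S (sval q) x gq sqS).
    pose d1 := e1 / (2 * M).
    have d1p : 0 < d1 by rewrite /d1; apply: divr_gt0 => //; apply: mulr_gt0.
    exists ([set x' | `|x' - x| < d1], [set q' : realization A le | supp (sval q') `<=` S /\
        forall y, `|sval q' y - sval q y| < d1]).
      by split; [exact: nbhsR | exists d1].
    move=> [x' q'] [/= hx [sq' hq']].
    apply: He1; first exact: (@Hf_suppS S (sval q') x' (proj2_sig q') sq').
    move=> z /=; apply: le_lt_trans.
      apply: (@Hf_lip (fset_set S) (sval q') (sval q) x' x d1).
      - exact: suppS_X.
      - exact: suppS_X.
      - exact: ltW.
      - by move=> y; apply: ltW.
    exact: (lip_aux Mp e1p (ltW d1p) (lexx _) (normr_ge0 _) hx).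
  move=> e ep HB.
  by exists e => // q' sq' hq'; apply: (HB q').
rewrite /interior.
exists (V, [set s' | `|s' - s| < d0]) => /=.
  by split; [apply: open_nbhs_nbhs | apply: nbhsR].
move=> [q s'] [/= Vq hs]; apply: Vq.
rewrite /J /= in_itv /=; move: hs; rewrite ltr_norml => /andP[h1 h2].
by apply/andP; split; lra.
Qed.

Lemma Lsum_ge0 t x : (forall y, 0 <= t y) -> 0 <= Lsum t x.
Proof. by move=> nn; apply: fsumr_ge0 => y _; case: ifP. Qed.

Lemma Lsum_le1 t x : geom_pt A le t -> t x != 0 -> Lsum t x + t x <= 1.
Proof.
move=> gp tx; have gp' := gp; case: gp' => fin sA nn _ _.
have HX := suppX fin.
rewrite (Lsum_X x HX) -(sum_geom gp).
have -> : t x = \sum_(w <- fset_set (supp t)) (if x == w then t x else 0).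
  by rewrite sum_pred1 // ?fset_uniq // HX.
rewrite -big_split /=; apply: ler_sum => w _.
have tw := nn w.
case: (asboolP (le w x /\ w <> x)) => c1; case: (eqVneq x w) => c3; try lra.
- by case: c1 => _; rewrite c3.
- by rewrite c3; lra.
Qed.

Lemma push0 (f : T -> T') z : push f (fun=> 0) z = 0.
Proof. by rewrite /push; apply: fsbig1. Qed.

Lemma clamp0 : clamp 0 = 0.
Proof. by case: (clamp_cases 0); lra. Qed.

Lemma clamp1 : clamp 1 = 1.
Proof. by case: (clamp_cases 1); lra. Qed.

Lemma HR0 p : sval (HR (p, 0)) = push phi (sval p).
Proof.
have gp := proj2_sig p; case: (gp) => _ _ nn _ _.
have lo0 : lo (sval p) 0 = sval p.
  apply/funext => x; rewrite /lo clamp0 subr0.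
  have [tx|tx] := eqVneq (sval p x) 0.
    by rewrite tx; move: (mm_cases 0 (1 - Lsum (sval p) x)); lra.
  have := Lsum_le1 gp tx; have := nn x.
  by move: (mm_cases (sval p x) (1 - Lsum (sval p) x)); lra.
have hi0 : hi (sval p) 0 = fun=> 0.
  by apply/funext => x; rewrite /hi lo0 subrr.
by apply/funext => z; rewrite /= /Hf lo0 hi0 push0 addr0.
Qed.

Lemma HR1 p : sval (HR (p, 1)) = push psi (sval p).
Proof.
have gp := proj2_sig p; case: (gp) => _ _ nn _ _.
have lo1 : lo (sval p) 1 = fun=> 0.
  apply/funext => x; rewrite /lo clamp1 subrr.
  have := Lsum_ge0 x nn.
  by move: (mm_cases (sval p x) (0 - Lsum (sval p) x)); lra.
have hi1 : hi (sval p) 1 = sval p.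
  by apply/funext => x; rewrite /hi lo1 subr0.
by apply/funext => z; rewrite /= /Hf lo1 hi1 push0 add0r.
Qed.

End Generic.

Lemma cont_reparam (X : topologicalType) (a b : R) :
  continuous (fun ps : X * R => (ps.1, a * ps.2 + b)).
Proof.
move=> [p s] W /= [[V I] [/= nV nI] sub].
move/nbhs_ballP: nI => [e /= e0 bI].
have k0 : 0 < e / (`|a| + 1) by apply: divr_gt0 => //; have := normr_ge0 a; lra.
exists (V, ball s (e / (`|a| + 1))) => /=.
  by split => //; apply: nbhsx_ballx.
move=> [q s'] [/= Vq hs]; apply: sub; split => //=; apply: bI.
move: hs; rewrite /ball /= => hs.
have -> : a * s + b - (a * s' + b) = a * (s - s') by ring.
rewrite normrM.
have h1 : `|s - s'| * (`|a| + 1) < e by rewrite -ltr_pdivlMr //; have := normr_ge0 a; lra.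
have := normr_ge0 (s - s'); have := normr_ge0 a; nra.
Qed.

Lemma real_eq (T : choiceType) (A : set T) (le : T -> T -> Prop) (u v : realization A le) :
  sval u = sval v -> u = v.
Proof. by case: u => u hu; case: v => v hv /= e; apply: eq_exist. Qed.

Lemma homle_anti (X Y : bigraph) (x y : mhT X Y) : homle x y -> homle y x -> x = y.
Proof. by move=> h1 h2; apply/funext => v; apply/seteqP; split; [apply: h1 | apply: h2]. Qed.

Lemma homle_tr (X Y : bigraph) (x y z : mhT X Y) : homle x y -> homle y z -> homle x z.
Proof. by move=> h1 h2 v a /h1 /h2. Qed.

Definition comp (X Y Z : bigraph) (eta : mhT Y Z) (xi : mhT X Y) : mhT X Z :=
  fun v => \bigcup_(a in xi v) eta a.

Definition Hrel (X Y Z : bigraph) (f g : mhT X Y -> mhT X Z) : Prop :=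
  exists H : HomK2 X Y * R -> HomK2 X Z, continuous H /\
    (forall p : HomK2 X Y, sval (H (p, 0)) = push f (sval p)) /\
    (forall p : HomK2 X Y, sval (H (p, 1)) = push g (sval p)).

Lemma comp_mh (X Y Z : bigraph) (eta : mhT Y Z) (xi : mhT X Y) :
  multihom2 eta -> multihom2 xi -> multihom2 (comp eta xi).
Proof.
case=> e1 e2 e3 [x1 x2 x3]; split.
- move=> v; have [fx [a xa]] := x1 v; split.
  + by apply: bigcup_finite => // a' _; exact: (e1 a').1.
  + by have [_ [b eb]] := e1 a; exists b; exists a.
- move=> v w vw a' b' [a xa ea] [b xb eb]; apply: (e2 a b) => //; exact: x2 vw a b xa xb.
- by move=> v a' [a xa ea]; rewrite (e3 _ _ ea); exact: x3.
Qed.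

Lemma comp_Hrel (X Y Z : bigraph) (eta eta' : mhT Y Z) :
  multihom2 eta -> multihom2 eta' -> homle eta eta' ->
  Hrel (@comp X Y Z eta) (comp eta').
Proof.
move=> me me' lee.
have anti : forall x y : mhT X Y, multihom2 x -> multihom2 y -> homle x y -> homle y x -> x = y.
  by move=> x y _ _; apply: homle_anti.
have tr : forall x y z : mhT X Y, multihom2 x -> multihom2 y -> multihom2 z ->
    homle x y -> homle y z -> homle x z.
  by move=> x y z _ _ _; apply: homle_tr.
have tr' : forall x y z : mhT X Z, multihom2 x -> multihom2 y -> multihom2 z ->
    homle x y -> homle y z -> homle x z.
  by move=> x y z _ _ _; apply: homle_tr.
have pA : forall x : mhT X Y, multihom2 x -> multihom2 (comp eta x).
  by move=> x; apply: comp_mh.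
have qA : forall x : mhT X Y, multihom2 x -> multihom2 (comp eta' x).
  by move=> x; apply: comp_mh.
have pm : forall x y : mhT X Y, multihom2 x -> multihom2 y -> homle x y ->
    homle (comp eta x) (comp eta y).
  by move=> x y _ _ h v b [a xa ea]; exists a => //; apply: h.
have qm : forall x y : mhT X Y, multihom2 x -> multihom2 y -> homle x y ->
    homle (comp eta' x) (comp eta' y).
  by move=> x y _ _ h v b [a xa ea]; exists a => //; apply: h.
have pq : forall x : mhT X Y, multihom2 x -> homle (comp eta x) (comp eta' x).
  by move=> x _ v b [a xa ea]; exists a => //; apply: lee.
exists (HR anti tr tr' pA qA pm qm pq); split; first exact: HR_cont.
by split => p; [exact: HR0 | exact: HR1].
Qed.

Lemma Hrel_sym (X Y Z : bigraph) (f g : mhT X Y -> mhT X Z) : Hrel f g -> Hrel g f.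
Proof.
move=> [H [cH [H0 H1]]].
exists (H \o (fun ps : HomK2 X Y * R => (ps.1, -1 * ps.2 + 1))); split.
  by move=> x; apply: continuous_comp; [exact: cont_reparam | exact: cH].
split => p /=.
  by rewrite mulr0 add0r H1.
by rewrite mulr1 addNr H0.
Qed.

Lemma within_setT (T U : topologicalType) (f : T -> U) :
  {within [set: T], continuous f} -> continuous f.
Proof.
move=> h x W hW; have := h x W hW.
rewrite /nbhs /= /nbhs_subspace /= ifT; last exact: mem_set. rewrite withinET. by [].
Qed.

Lemma closed_snd_le (T : topologicalType) (c : R) : closed [set ps : T * R | ps.2 <= c].
Proof.
have -> : [set ps : T * R | ps.2 <= c] = snd @^-1` [set r : R | r <= c] by [].
apply: preimage_closed; last exact: closed_le.
by move=> x _; exact: cvg_snd.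
Qed.

Lemma closed_snd_ge (T : topologicalType) (c : R) : closed [set ps : T * R | c <= ps.2].
Proof.
have -> : [set ps : T * R | c <= ps.2] = snd @^-1` [set r : R | c <= r] by [].
apply: preimage_closed; last exact: closed_ge.
by move=> x _; exact: cvg_snd.
Qed.

Lemma Hrel_trans (X Y Z : bigraph) (f g h : mhT X Y -> mhT X Z) :
  Hrel f g -> Hrel g h -> Hrel f h.
Proof.
move=> [H1 [c1 [H10 H11]]] [H2 [c2 [H20 H21]]].
pose G1 := H1 \o (fun ps : HomK2 X Y * R => (ps.1, 2 * ps.2 + 0)).
pose G2 := H2 \o (fun ps : HomK2 X Y * R => (ps.1, 2 * ps.2 + -1)).
have cG1 : continuous G1.
  by move=> x; apply: continuous_comp; [exact: cont_reparam | exact: c1].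
have cG2 : continuous G2.
  by move=> x; apply: continuous_comp; [exact: cont_reparam | exact: c2].
pose H := fun ps : HomK2 X Y * R => if ps.2 <= 2^-1 then G1 ps else G2 ps.
exists H; split.
  apply: within_setT.
  have -> : [set: HomK2 X Y * R] = [set ps | ps.2 <= 2^-1] `|` [set ps | 2^-1 <= ps.2].
    apply/seteqP; split => // ps _ /=; case: (leP ps.2 (2^-1)) => hh; [left|right] => //.
    exact: ltW.
  apply: withinU_continuous; [exact: closed_snd_le | exact: closed_snd_ge | |].
    apply: (@subspace_eq_continuous _ _ _ G1); last exact: continuous_subspaceT.
    by move=> ps /set_mem /= hp; rewrite /from_subspace /H hp.
  apply: (@subspace_eq_continuous _ _ _ G2); last exact: continuous_subspaceT.
  move=> [p s] /set_mem /= hp; rewrite /from_subspace /H /=; case: ifPn => // hs.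
  have -> : s = 2^-1 by apply/eqP; rewrite eq_le hs hp.
  apply: real_eq; rewrite /G1 /G2 /=.
  have -> : 2 * 2^-1 + 0 = 1 :> R by field.
  have -> : 2 * 2^-1 + -1 = 0 :> R by field.
  by rewrite H11 H20.
split => p; rewrite /H /=.
  by rewrite ifT ?invr_ge0 ?ler0n // /G1 /= mulr0 addr0 H10.
rewrite ifF; last by apply/negbTE; rewrite -ltNge invf_lt1 ?ltr1n.
rewrite /G2 /=; have -> : 2 * 1 + -1 = 1 :> R by lra.
by rewrite H21.
Qed.

Lemma mh_of_mh (Y Z : bigraph) (f : bV Y -> bV Z) : bihom f -> multihom2 (mh_of f : mhT Y Z).
Proof.
case=> f1 f2; split.
- by move=> v; split; [exact: finite_set1 | exists (f v)].
- by move=> v w vw a b /= -> ->; apply: f1.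
- by move=> v a /= ->; apply: f2.
Qed.

Lemma fstar_comp (X Y Z : bigraph) (f : bV Y -> bV Z) :
  @fstar X Y Z f = comp (mh_of f).
Proof.
apply/funext => xi; apply/funext => v; apply/seteqP; split => b.
  by case=> a xa <-; exists a.
by case=> a xa /= ->; exists a.
Qed.

Theorem lemma3p1 (Y Z : bigraph) (f g : bV Y -> bV Z) :
  bihom f -> bihom g -> xhomotopic f g ->
  forall X : bigraph,
  exists H : HomK2 X Y * R -> HomK2 X Z,
    {within [set pt | 0 <= pt.2 <= 1], continuous H} /\
    (forall p : HomK2 X Y, sval (H (p, 0)) = push (@fstar X Y Z f) (sval p)) /\
    (forall p : HomK2 X Y, sval (H (p, 1)) = push (@fstar X Y Z g) (sval p)).
Proof.
move=> bf bg [pf [pg [epf [epg cc]]]] X.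
suff [H [cH [H0 H1]]] : Hrel (@comp X Y Z (mh_of f)) (comp (mh_of g)).
  exists H; split; first exact: continuous_subspaceT.
  by rewrite !fstar_comp; split => p; [rewrite H0 | rewrite H1].
have mf := mh_of_mh bf; have mg := mh_of_mh bg.
pose F := @comp X Y Z (mh_of f).
have step : forall eta eta' : mhT Y Z, multihom2 eta -> multihom2 eta' ->
    (homle eta eta' \/ homle eta' eta) -> Hrel F (comp eta) -> Hrel F (comp eta').
  move=> eta eta' m m' [l|l] h; apply: (Hrel_trans h).
    exact: comp_Hrel.
  by apply: Hrel_sym; apply: comp_Hrel.
pose O : set (HomK2 Y Z) :=
  [set q | exists2 eta, supp (sval q) eta & Hrel F (@comp X Y Z eta)].
have Oo : open O.
  have : weak_open O; last by [].
  move=> S finS q [eta seta heta] sqS.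
  have gq := proj2_sig q; case: (gq) => _ _ nn _ _.
  have qe : 0 < sval q eta by rewrite lt0r seta nn.
  exists (sval q eta) => // q' _ hq'; exists eta => //.
  rewrite /supp /=; apply/eqP => q'0; have := hq' eta; rewrite q'0 sub0r normrN.
  by rewrite gtr0_norm // ltxx.
have Oc : open (~` O).
  have : weak_open (~` O); last by [].
  move=> S finS q nOq sqS.
  have gq := proj2_sig q; have gq' := gq; case: gq' => fin sA nn _ _.
  have := sum_geom gq; move=> s1.
  have : \sum_(x <- fset_set (supp (sval q))) sval q x != 0 by rewrite s1 oner_neq0.
  move=> /sum_neq0 [x0 _ qx0].
  exists `|sval q x0|; first by rewrite normr_gt0.
  move=> q' _ hq' [eta seta heta]; apply: nOq; exists x0 => //.
  have gq2 := proj2_sig q'; case: gq2 => _ sA' _ _ ch'.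
  have sx0 : supp (sval q') x0.
    rewrite /supp /=; apply/eqP => q'0; have := hq' x0; rewrite q'0 sub0r normrN.
    by rewrite ltxx.
  apply: (step eta x0 (sA' _ seta) (sA _ qx0)) => //.
  exact: ch'.
case: cc => C [Cpf _ cC] Cpg.
have Opf : O pf.
  exists (mh_of f : mhT Y Z); first by rewrite epf /supp /= /vertex asboolT // oner_neq0.
  by apply: comp_Hrel => // v a.
have E : C `&` O = C.
  apply: cC; first by exists pf.
    by exists O.
  exists O => //; rewrite -(setCK O); exact: open_closedC.
have : (C `&` O) pg by rewrite E.
case=> _ [eta seta heta].
move: seta heta; rewrite epg /supp /= /vertex; case: asboolP => [->|] //.
by rewrite eqxx.
Qed.
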